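(* For $0\le r\le n$ and $0\le s\le\min(r,n-r)$, $\mathrm{tr}(\Lambda_s^{r,r})=\binom{n}{r}$, and the orthogonal projection $P_s^r$ of $L^2(X)$ onto $L^2(X_r)_s$ is $$P_s^r=\frac{\binom{n}{s}-\binom{n}{s-1}}{\binom{n}{r}}\,\Lambda_s^{r,r}.$$
   Context: Let $\Omega$ be a finite set with $|\Omega|=n\ge1$, $G=S(\Omega)$, $X=\mathcal P(\Omega)$, $X_r=\{x\in X:|x|=r\}$, $G$ acting on $L^2(X)$ (complex functions on $X$ with standard inner product; $L^2(X_r)$ = functions supported on $X_r$) by $(\rho(g)\psi)(x)=\psi(g^{-1}x)$. For $0\le s\le\min(r,n-r)$, $L^2(X_r)_s$ is the unique irreducible $G$-subspace of $L^2(X_r)$ isomorphic to the irreducible representation associated with the partition $(n-s,s)$. For $0\le s\le\min(r_1,n-r_1,r_2,n-r_2)$, $\Lambda_s^{r_1,r_2}$ is a $G$-equivariant map $L^2(X)\to L^2(X)$ sending $L^2(X_{r_1})_s$ into $L^2(X_{r_2})_s$ and vanishing on its orthogonal complement, with kernel $\lambda$ defined on integers $\max(0,r_2-r_1)\le k\le\min(n-r_1,r_2)$ by $(\Lambda_s^{r_1,r_2}\psi)(x_2)=\sum_{x_1\in X_{r_1}}\lambda(|x_2\setminus x_1|)\psi(x_1)$. The kernel agrees on its domain with a unique polynomial of degree $s$ which is nonzero at $0$; $\Lambda_s^{r_1,r_2}$ is normalized so that this polynomial takes the value $1$ at $t=0$. Convention $\binom{n}{-1}=0$. *)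

(* Defs.v *)
From HB Require Import structures.
From mathcomp Require Import all_boot all_order all_algebra all_fingroup all_field.
Set Implicit Arguments. Unset Strict Implicit. Unset Printing Implicit Defensive.
Import Order.TTheory GRing.Theory Num.Theory.
Local Open Scope ring_scope.

(* Omega = 'I_n, X = P(Omega) = {set 'I_n}, L^2(X) = complex functions on X.
   Complex numbers: algC (algebraic closure of Q with conjugation). *)
Definition L2 (n : nat) := {ffun {set 'I_n} -> algC^o}.

Definition dotL2 n (f g : L2 n) : algC := \sum_(x : {set 'I_n}) f x * (g x)^*.

Definition rho n (g : {perm 'I_n}) (f : L2 n) : L2 n :=
  [ffun x : {set 'I_n} => f ((g^-1)%g @: x)].

Definition deltaL2 n (x : {set 'I_n}) : L2 n := [ffun y => (y == x)%:R].

Definition traceL2 n (L : L2 n -> L2 n) : algC :=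
  \sum_(x : {set 'I_n}) L (deltaL2 x) x.

Definition supported_on n (r : nat) (f : L2 n) := forall x : {set 'I_n}, #|x| != r -> f x = 0.

Definition G_invariant n (W : {vspace L2 n}) :=
  forall (g : {perm 'I_n}) (f : L2 n), f \in W -> rho g f \in W.

Definition subchar n (W : {vspace L2 n}) (g : {perm 'I_n}) : algC :=
  \sum_(i < \dim W) coord (vbasis W) i (rho g (tnth (vbasis W) i)).

(* number of k-subsets of Omega fixed by g (permutation character of M^(n-k,k)) *)
Definition fixcount n (k : nat) (g : {perm 'I_n}) : nat :=
  #|[set x : {set 'I_n} | (#|x| == k) && (g @: x == x)]|.

(* character of the irreducible representation of S_n associated to the
   partition (n-s, s), s <= n/2:  chi_(n-s,s) = chi_{M^(n-s,s)} - chi_{M^(n-s+1,s-1)}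
   (Young's rule), with the convention that the second term is 0 for s = 0. *)
Definition chi_irr n (s : nat) (g : {perm 'I_n}) : algC :=
  (fixcount s g)%:R - (if s is s'.+1 then fixcount s' g else 0)%:R.

(* binomial coefficient with convention binom(n, -1) = 0: this is binom(n, s-1) *)
Definition binom_pred (n s : nat) : nat := if s is s'.+1 then 'C(n, s') else 0.

(* W is L^2(X_r)_s: a G-subspace of L^2(X_r) isomorphic to the irreducible
   representation associated with (n-s, s) (isomorphism of complex
   representations of a finite group <=> equality of characters). *)
Definition is_L2_component n (r s : nat) (W : {vspace L2 n}) :=
  [/\ forall f, f \in W -> supported_on r f,
      G_invariant W &
      forall g, subchar W g = chi_irr s g].

Definition is_Lambda n (r s : nat) (W : {vspace L2 n}) (p : {poly algC})
  (L : L2 n -> L2 n) :=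
  [/\ (forall (a : algC) (u v : L2 n), L (a *: u + v) = a *: L u + L v)
      /\ (forall g f, L (rho g f) = rho g (L f)),
      forall f, f \in W -> L f \in W,
      forall f, (forall h, h \in W -> dotL2 f h = 0) -> L f = 0,
      size p = s.+1 /\ p.[0] = 1 &
      forall (f : L2 n) (x2 : {set 'I_n}), #|x2| = r ->
        L f x2 = \sum_(x1 : {set 'I_n} | #|x1| == r) p.[(#|x2 :\: x1|)%:R] * f x1].

(* Main.v *)
From HB Require Import structures.
From mathcomp Require Import all_boot all_order all_algebra all_fingroup all_field all_character.
From mathcomp Require Import zify ring lra.
Require Import Defs.
Set Implicit Arguments. Unset Strict Implicit. Unset Printing Implicit Defensive.
Import Order.TTheory GRing.Theory Num.Theory.

Lemma card_pred_comp (T K : finType) (f : T -> K) (P : pred K) :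
  #|[pred x | P (f x)]| = (\sum_(k | P k) #|[set x | f x == k]|)%N.
Proof.
rewrite -sum1_card (partition_big f P) //=.
apply: eq_bigr => k Pk; rewrite -sum1_card; apply: eq_bigl => x.
by rewrite !inE /=; case: (f x =P k) => [->|]; rewrite ?Pk ?andbF.
Qed.


Lemma count_enumT (T : finType) (p : pred T) : count p (enum T) = #|[pred x | p x]|.
Proof. by rewrite enumT -size_filter cardE. Qed.

Lemma relabel (T K : finType) (f h : T -> K) :
  (forall k, #|[set x | f x == k]| = #|[set x | h x == k]|) ->
  exists s : {perm T}, forall x, h (s x) = f x.
Proof.
move=> Hc.
pose leK := fun k k' : K => (enum_rank k <= enum_rank k')%N.
have leK_total : total leK by move=> k k'; apply: leq_total.
have leK_trans : transitive leK by move=> ? ? ?; apply: leq_trans.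
have leK_anti : antisymmetric leK.
  by move=> k k' /andP[H1 H2]; apply: enum_rank_inj; apply: val_inj; apply/eqP; rewrite /= eqn_leq; apply/andP; split.
pose lf := relpre f leK; pose lh := relpre h leK.
have lf_total : total lf by move=> x y; apply: leK_total.
have lh_total : total lh by move=> x y; apply: leK_total.
pose sf := sort lf (enum T); pose sh := sort lh (enum T).
have Esf : perm_eq sf (enum T) by rewrite perm_sort.
have Esh : perm_eq sh (enum T) by rewrite perm_sort.
have Smap : map f sf = map h sh.
  have S1 : sorted leK (map f sf) by rewrite sorted_map; apply: sort_sorted.
  have S2 : sorted leK (map h sh) by rewrite sorted_map; apply: sort_sorted.
  apply: (sorted_eq leK_trans leK_anti S1 S2).
  apply/seq.permP => P; rewrite !count_map (seq.permP Esf) (seq.permP Esh).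

  rewrite !count_enumT.
  rewrite (card_pred_comp f P) (card_pred_comp h P).
  by apply: eq_bigr => k _; rewrite Hc.
have szf : size sf = #|T| by rewrite (perm_size Esf) cardE.
have szh : size sh = #|T| by rewrite (perm_size Esh) cardE.
have memf x : x \in sf by rewrite (perm_mem Esf) mem_enum.
have uh : uniq sh by rewrite (perm_uniq Esh) enum_uniq.
pose sig x := nth x sh (index x sf).
have sig_inj : injective sig.
  move=> x y; rewrite /sig => E.
  have ix : (index x sf < size sh)%N by rewrite szh -szf index_mem.
  have iy : (index y sf < size sh)%N by rewrite szh -szf index_mem.
  rewrite (set_nth_default y) // in E.
  move/eqP: E; rewrite nth_uniq // => /eqP Ei.
  by rewrite -(nth_index x (memf x)) Ei nth_index.
exists (perm sig_inj) => x; rewrite permE /sig.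
have ix : (index x sf < size sh)%N by rewrite szh -szf index_mem.
rewrite -(nth_map x (h x) h ix) -Smap (nth_map x) ?nth_index //.
by rewrite index_mem.
Qed.

Section PairAct.
Variable T : finType.

Definition pto (p : {set T} * {set T}) (g : {perm T}) := (g @: p.1, g @: p.2).

Lemma imset_perm1 (A : {set T}) : (1%g : {perm T}) @: A = A.
Proof. by rewrite (eq_imset _ (@perm1 T)) imset_id. Qed.

Lemma imset_permM (g h : {perm T}) (A : {set T}) : (g * h)%g @: A = h @: (g @: A).
Proof. by rewrite -imset_comp; apply: eq_imset => x; rewrite permM. Qed.

Lemma pto1 : pto^~ 1%g =1 id.
Proof. by case=> x y; rewrite /pto /= !imset_perm1. Qed.

Lemma ptoM p : act_morph pto p.
Proof. by move=> g h; rewrite /pto /= !imset_permM. Qed.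

Definition pact := TotalAction pto1 ptoM.

Lemma card_imset_perm (g : {perm T}) (A : {set T}) : #|g @: A| = #|A|.
Proof. by rewrite card_imset //; apply: perm_inj. Qed.

Definition Sab a b := setX [set x : {set T} | #|x| == a] [set x : {set T} | #|x| == b].

Lemma acts_Sab a b : [acts [set: {perm T}], on Sab a b | pact].
Proof.
apply/actsP => g _ [x y]; rewrite !inE /= !card_imset_perm //.
Qed.

Definition fixc (k : nat) (g : {perm T}) : nat :=
  #|[set x : {set T} | (#|x| == k) && (g @: x == x)]|.

Lemma card_Fix a b g :
  #|('Fix_(Sab a b | pact)[g])%g| = (fixc a g * fixc b g)%N.
Proof.
rewrite /fixc -cardsX; apply: eq_card => [[x y]].
rewrite !inE sub1set inE /pto /= xpair_eqE.
by case: (#|x| == a); case: (#|y| == b); case: (_ == x); case: (_ == y).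
Qed.

Definition inter (p : {set T} * {set T}) := #|p.1 :&: p.2|.

Lemma inter_pto p g : inter (pto p g) = inter p.
Proof.
rewrite /inter /pto /= -imsetI ?card_imset_perm //.
by move=> x y _ _; apply: perm_inj.
Qed.

Lemma blockcard_eq (p q : {set T} * {set T}) :
  #|p.1| = #|q.1| -> #|p.2| = #|q.2| -> inter p = inter q ->
  forall k : bool * bool,
  #|[set x | (x \in p.1, x \in p.2) == k]| = #|[set x | (x \in q.1, x \in q.2) == k]|.
Proof.
case: p q => [p1 p2] [q1 q2] /= E1 E2; rewrite /inter /= => EI [u v].
have blk (A B : {set T}) :
  #|[set x | (x \in A, x \in B) == (u, v)]| =
  if u then (if v then #|A :&: B| else #|A| - #|A :&: B|)
  else (if v then #|B| - #|A :&: B| else #|T| - (#|A| + #|B| - #|A :&: B|)).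
  have -> : [set x | (x \in A, x \in B) == (u, v)] =
    (if u then (if v then A :&: B else A :\: B)
     else (if v then B :\: A else ~: (A :|: B))).
    apply/setP => x; rewrite !inE xpair_eqE.
    by case: u; case: v; rewrite !inE; case: (x \in A); case: (x \in B).
  case: u; case: v.
  - by [].
  - by have := cardsID B A; lia.
  - by have := cardsID A B; rewrite setIC; lia.
  - have := cardsC (A :|: B); have := cardsUI A B; lia.
by rewrite !blk E1 E2 EI.
Qed.

Lemma pto_trans (p q : {set T} * {set T}) :
  #|p.1| = #|q.1| -> #|p.2| = #|q.2| -> inter p = inter q ->
  exists g : {perm T}, pto p g = q.
Proof.
move=> E1 E2 EI.
have [g Hg] := relabel (blockcard_eq E1 E2 EI).
exists g; case: p q Hg {E1 E2 EI} => [p1 p2] [q1 q2] /= Hg.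
have key (A B : {set T}) : (forall x, (g x \in B) = (x \in A)) -> g @: A = B.
  move=> H; apply/setP => y; rewrite -{1}(permKV g y) mem_imset; last exact: perm_inj.
  by rewrite -H permKV.
rewrite /pto /= (key p1 q1) ?(key p2 q2) // => x; have := Hg x; by case.
Qed.

End PairAct.

Lemma count_iota_int lo hi N : (lo <= hi)%N -> (hi <= N)%N ->
  count (fun k => (lo <= k) && (k < hi))%N (iota 0 N) = (hi - lo)%N.
Proof.
move=> H1 H2.
have -> : N = (lo + ((hi - lo) + (N - hi)))%N by lia.
rewrite !iotaD !count_cat.
rewrite (@eq_in_count _ _ pred0 (iota 0 lo)); last first.
  by move=> k; rewrite mem_iota /= => ?; apply/negP => /andP[? ?]; lia.
rewrite (@eq_in_count _ _ predT (iota _ (hi - lo))); last by move=> k; rewrite mem_iota /= => /andP[? ?]; apply/andP; split; lia.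
rewrite (@eq_in_count _ _ pred0 (iota _ (N - hi))); last by move=> k; rewrite mem_iota /= => /andP[? ?]; apply/negP => /andP[? ?]; lia.
by rewrite !count_pred0 count_predT size_iota; lia.
Qed.

Lemma card_interval N lo hi : (lo <= hi)%N -> (hi <= N)%N ->
  #|[set x : 'I_N | (lo <= x) && (x < hi)]| = (hi - lo)%N.
Proof.
move=> H1 H2.
rewrite -(count_iota_int H1 H2) -val_enum_ord count_map count_enumT.
by apply: eq_card => x; rewrite !inE.
Qed.

Section Orbits.
Variable n : nat.
Local Notation T := 'I_n.
Local Notation G := [set: {perm T}].

Definition rep a b i : {set T} * {set T} :=
  ([set x : T | (0 <= x) && (x < a)], [set x : T | (a - i <= x) && (x < a - i + b)]).

Lemma card_lt hi : (hi <= n)%N -> #|[set x : T | (x < hi)%N]| = hi.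
Proof.
move=> H; rewrite -[RHS]subn0 -(@card_interval n 0 hi) //.
Qed.

Lemma rep_S a b i : (a + b <= n)%N -> (i <= minn a b)%N ->
  rep a b i \in Sab T a b /\ inter (rep a b i) = i.
Proof.
move=> Hab Hi; rewrite /Sab /rep /inter !inE /=.
have C1 : #|[set x : T | (x < a)%N]| = a by apply: card_lt; lia.
have C2 : #|[set x : T | (a - i <= x) && (x < a - i + b)]| = b.
  by rewrite card_interval; lia.
have E : [set x : T | (0 <= x) && (x < a)] = [set x : T | (x < a)%N].
  by apply/setP => x; rewrite !inE.
rewrite C1 C2 !eqxx; split => //.
have -> : [set x : T | (x < a)%N] :&: [set x : T | (a - i <= x) && (x < a - i + b)]
        = [set x : T | (a - i <= x) && (x < a)].
  apply/setP => x; rewrite !inE; apply/idP/idP.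
    by move=> /andP[? /andP[? ?]]; apply/andP; split; lia.
  by move=> /andP[? ?]; apply/andP; split; [|apply/andP; split]; lia.
rewrite card_interval; lia.
Qed.

Lemma orbit_inter (p q : {set T} * {set T}) :
  q \in orbit (pact T) G p -> inter q = inter p.
Proof. by case/orbitP => g _ <-; apply: inter_pto. Qed.

Lemma norbits a b : (a + b <= n)%N ->
  #|[set orbit (pact T) G x | x in Sab T a b]| = (minn a b).+1.
Proof.
move=> Hab.
pose R (i : 'I_(minn a b).+1) := orbit (pact T) G (rep a b i).
have -> : [set orbit (pact T) G x | x in Sab T a b] = [set R i | i in 'I_(minn a b).+1].
  apply/setP => O; apply/imsetP/imsetP => [[p Sp ->]|[i _ ->]].
  - have Hi : (inter p < (minn a b).+1)%N.
      move: Sp; rewrite /Sab /inter !inE => /andP[/eqP H1 /eqP H2].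
      rewrite ltnS leq_min -{1}H1 -H2; apply/andP; split; apply: subset_leq_card.
        exact: subsetIl.
      exact: subsetIr.
    exists (Ordinal Hi) => //.
    have [Sr Ir] := rep_S Hab (Hi : (inter p <= minn a b)%N).
    move: Sp Sr; rewrite /Sab !inE => /andP[/eqP H1 /eqP H2] /andP[/eqP H3 /eqP H4].
    have [g Hg] : exists g, pto (rep a b (inter p)) g = p.
      by apply: pto_trans; rewrite ?H1 ?H2 ?H3 ?H4.
    rewrite /R /=; apply/orbit_eqP; apply/orbitP; exists g => //.
  - by exists (rep a b i) => //; have [] := rep_S Hab (ltnSE (ltn_ord i)).
rewrite card_imset ?card_ord // => i j Eij.
have [_ Ii] := rep_S Hab (ltnSE (ltn_ord i)).
have [_ Ij] := rep_S Hab (ltnSE (ltn_ord j)).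
apply: val_inj; rewrite /= -Ii -Ij; apply: orbit_inter.
rewrite -/(R j) -Eij; exact: orbit_refl.
Qed.

Lemma sum_fix a b : (a + b <= n)%N ->
  (\sum_(g : {perm T}) fixc a g * fixc b g)%N = ((minn a b).+1 * #|{perm T}|)%N.
Proof.
move=> Hab.
have := Frobenius_Cauchy (acts_Sab T a b); rewrite norbits // cardsT => <-.
rewrite (eq_bigl predT); last by move=> g; rewrite inE.
by apply: eq_bigr => g _; rewrite card_Fix.
Qed.
End Orbits.
Local Open Scope ring_scope.

Section Lin.
Variable n : nat.
Implicit Types f g h : L2 n.

Lemma dotDl f g h : dotL2 (f + g) h = dotL2 f h + dotL2 g h.
Proof. by rewrite /dotL2 -big_split; apply: eq_bigr => x _; rewrite ffunE mulrDl. Qed.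

Lemma dotZl a f h : dotL2 (a *: f) h = a * dotL2 f h.
Proof. by rewrite /dotL2 mulr_sumr; apply: eq_bigr => x _; rewrite ffunE mulrA. Qed.

Lemma dotNl f h : dotL2 (- f) h = - dotL2 f h.
Proof. by rewrite -scaleN1r dotZl mulN1r. Qed.

Lemma dotBl f g h : dotL2 (f - g) h = dotL2 f h - dotL2 g h.
Proof. by rewrite dotDl dotNl. Qed.

Lemma dotDr f g h : dotL2 f (g + h) = dotL2 f g + dotL2 f h.
Proof. by rewrite /dotL2 -big_split; apply: eq_bigr => x _; rewrite ffunE rmorphD mulrDr. Qed.

Lemma dotZr a f h : dotL2 f (a *: h) = a^* * dotL2 f h.
Proof.
rewrite /dotL2 mulr_sumr; apply: eq_bigr => x _; rewrite ffunE rmorphM /=.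
by rewrite mulrCA.
Qed.

Lemma dot0l h : dotL2 0 h = 0.
Proof. by rewrite /dotL2 big1 // => x _; rewrite ffunE mul0r. Qed.

Lemma dot0r h : dotL2 h 0 = 0.
Proof. by rewrite /dotL2 big1 // => x _; rewrite ffunE rmorph0 mulr0. Qed.

Lemma dot_suml m (F : 'I_m -> L2 n) h :
  dotL2 (\sum_(i < m) F i) h = \sum_(i < m) dotL2 (F i) h.
Proof.
elim/big_rec2: _ => [|i y1 y2 _ <-]; first by rewrite dot0l.
by rewrite dotDl.
Qed.

Lemma dot_sumr m (F : 'I_m -> L2 n) h :
  dotL2 h (\sum_(i < m) F i) = \sum_(i < m) dotL2 h (F i).
Proof.
elim/big_rec2: _ => [|i y1 y2 _ <-]; first by rewrite dot0r.
by rewrite dotDr.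
Qed.

Lemma dot_pos f : dotL2 f f = 0 -> f = 0.
Proof.
move=> H; apply/ffunP => x; rewrite ffunE.
have H0 : forall y, true -> 0 <= f y * (f y)^* by move=> y _; rewrite -normCK exprn_ge0.
have := psumr_eq0P H0 H (i := x) isT.
by rewrite -normCK => /eqP; rewrite sqrf_eq0 normr_eq0 => /eqP.
Qed.

Variable W : {vspace L2 n}.
Local Notation d := (\dim W).
Local Notation b := (vbasis W).

Lemma bW (i : 'I_d) : b`_i \in W.
Proof. by apply: vbasis_mem; apply: mem_nth; rewrite size_tuple. Qed.

Lemma bfree : free b.
Proof. exact: basis_free (vbasisP W). Qed.

Lemma perp_basis f : (forall i : 'I_d, dotL2 f b`_i = 0) ->
  forall h, h \in W -> dotL2 f h = 0.
Proof.
move=> H h /coord_vbasis ->; rewrite dot_sumr big1 // => i _.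
by rewrite dotZr H mulr0.
Qed.

Definition Gram : 'M[algC]_d := \matrix_(j, i) dotL2 b`_j b`_i.

Lemma Gram_ker (u : 'rV[algC]_d) : u *m Gram = 0 -> u = 0.
Proof.
move=> H.
pose w := \sum_(j < d) u 0 j *: b`_j.
have Hw (i : 'I_d) : dotL2 w b`_i = 0.
  have := congr1 (fun M : 'rV[algC]_d => M 0 i) H; rewrite !mxE => <-.
  rewrite dot_suml; apply: eq_bigr => j _; by rewrite dotZl mxE.
have w0 : w = 0.
  apply: dot_pos; rewrite {2}/w dot_sumr big1 // => i _.
  by rewrite dotZr Hw mulr0.
apply/rowP => j; rewrite mxE.
by move/freeP: bfree => /(_ (fun j => u 0 j)) ->.
Qed.

Lemma Gram_unit : Gram \in unitmx.
Proof.
rewrite -row_free_unit -kermx_eq0; apply/eqP/row_matrixP => k; rewrite row0.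
apply: Gram_ker; apply/sub_kermxP; exact: row_sub.
Qed.

Lemma decomp f : exists2 w, w \in W & forall h, h \in W -> dotL2 (f - w) h = 0.
Proof.
pose v : 'rV[algC]_d := \row_i dotL2 f b`_i.
pose a := v *m invmx Gram.
exists (\sum_(j < d) a 0 j *: b`_j).
  by apply: memv_suml => j _; apply: memvZ; apply: bW.
apply: perp_basis => i.
rewrite dotBl dot_suml.
have -> : \sum_(j < d) dotL2 (a 0 j *: b`_j) b`_i = (a *m Gram) 0 i.
  by rewrite mxE; apply: eq_bigr => j _; rewrite dotZl [Gram j i]mxE.
by rewrite /a mulmxKV ?Gram_unit // mxE subrr.
Qed.

End Lin.

Section Rep.
Variable n : nat.
Variable W : {vspace L2 n}.
Local Notation d := (\dim W).
Local Notation b := (vbasis W).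

Definition linL (T : L2 n -> L2 n) := forall a u v, T (a *: u + v) = a *: T u + T v.

Lemma lin0 T : linL T -> T 0 = 0.
Proof.
move=> H; have E := H 1 0 0; rewrite !scale1r addr0 in E.
by have := congr1 (fun z => z - T 0) E; rewrite subrr addrK.
Qed.

Lemma linD T : linL T -> forall u v, T (u + v) = T u + T v.
Proof. by move=> H u v; rewrite -{1}[u]scale1r H scale1r. Qed.

Lemma linZ T : linL T -> forall a u, T (a *: u) = a *: T u.
Proof. by move=> H a u; rewrite -[a *: u]addr0 H lin0 // addr0. Qed.

Lemma lin_sumZ T (I : finType) (c : I -> algC) (v : I -> L2 n) : linL T ->
  T (\sum_(i : I) c i *: v i) = \sum_(i : I) c i *: T (v i).
Proof.
move=> H; elim/big_rec2: _ => [|i y1 y2 _ <-]; first exact: lin0.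
by rewrite H.
Qed.

Definition Mx (T : L2 n -> L2 n) : 'M[algC]_d :=
  \matrix_(i, j) coord b i (T b`_j).

Lemma Mx_ext S T : (forall f, S f = T f) -> Mx S = Mx T.
Proof. by move=> H; apply/matrixP => i j; rewrite !mxE H. Qed.

Lemma Mx_comp S T : linL S -> (forall w, w \in W -> T w \in W) ->
  Mx (S \o T) = Mx S *m Mx T.
Proof.
move=> HS HT; apply/matrixP => i j; rewrite !mxE /=.
rewrite {1}(coord_vbasis (HT _ (bW j))) lin_sumZ // linear_sum.
by apply: eq_bigr => k _; rewrite linearZ /= !mxE mulrC.
Qed.

Lemma rho_lin g : linL (rho g).
Proof. by move=> a u v; apply/ffunP => x; rewrite !ffunE. Qed.

Lemma rho1 (f : L2 n) : rho 1 f = f.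
Proof. by apply/ffunP => x; rewrite ffunE invg1 imset_perm1. Qed.

Lemma rhoM g h (f : L2 n) : rho (g * h) f = rho h (rho g f).
Proof. by apply/ffunP => x; rewrite !ffunE invMg imset_permM. Qed.

Definition rGf (g : {perm 'I_n}) := (Mx (rho g))^T.

Lemma Mx_id : Mx id = 1%:M.
Proof.
apply/matrixP => i j; rewrite !mxE /= (coord_free _ _ (bfree W)).
by rewrite eq_sym.
Qed.

Lemma rG_repr (Winv : G_invariant W) : mx_repr [set: {perm 'I_n}] rGf.
Proof.
split.
  by rewrite /rGf (@Mx_ext _ id) ?Mx_id ?trmx1 // => f; rewrite rho1.
move=> x y _ _; rewrite /rGf -trmx_mul -Mx_comp.
- by congr (_^T); apply: Mx_ext => f /=; rewrite rhoM.
- exact: rho_lin.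
- by move=> w Hw; apply: Winv.
Qed.

End Rep.

Lemma fixcountE n k (g : {perm 'I_n}) : fixcount k g = fixc k g.
Proof. by []. Qed.

Lemma chi_conj n s (g : {perm 'I_n}) : (chi_irr s g)^* = chi_irr s g.
Proof. by rewrite /chi_irr rmorphB /= !conjC_nat. Qed.

Lemma sum_fixR n a b : (a + b <= n)%N ->
  \sum_(g : {perm 'I_n}) ((fixc a g)%:R * (fixc b g)%:R : algC) =
  ((minn a b).+1 * #|{perm 'I_n}|)%:R.
Proof.
move=> H; rewrite -sum_fix // natr_sum; apply: eq_bigr => g _; by rewrite natrM.
Qed.

Lemma chi_norm_sum n s : (s + s <= n)%N ->
  \sum_(g : {perm 'I_n}) `|chi_irr s g| ^+ 2 = (#|{perm 'I_n}|)%:R.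
Proof.
move=> Hs.
have E g : `|chi_irr s g| ^+ 2 = chi_irr s g * chi_irr s g by rewrite normCK chi_conj.
under eq_bigr do rewrite E.
clear E; case: s Hs => [|s] Hs.
  rewrite /chi_irr; under eq_bigr do rewrite subr0 fixcountE.
  by rewrite sum_fixR // mul1n.
rewrite /chi_irr.
have E2 (x y : algC) : (x - y) * (x - y) = x * x + y * y - 2%:R * (x * y).
  by ring.
under eq_bigr do rewrite E2 !fixcountE.
rewrite sumrB big_split /= -mulr_sumr !sum_fixR; try lia.
rewrite !minnn (minn_idPr (leqnSn s)) -!natrM -natrD -natrB; last first.
  nia.
by congr (_%:R); nia.
Qed.

Section Schur.
Variables (n r s : nat) (W : {vspace L2 n}).
Local Notation d := (\dim W).
Local Notation b := (vbasis W).
Local Notation GG := [set: {perm 'I_n}]%G.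

Lemma schur (HW : is_L2_component r s W) (Hs : (s + s <= n)%N) (L : L2 n -> L2 n) :
  linL L -> (forall g f, L (rho g f) = rho g (L f)) -> (forall f, f \in W -> L f \in W) ->
  exists mu, forall w, w \in W -> L w = mu *: w.
Proof.
case: HW => Wsupp Winv Wchar HL Leq LW.
pose rG : mx_representation algC GG d := MxRepresentation (rG_repr Winv).
have chiE x : cfRepr rG x = chi_irr s x.
  rewrite cfunE inE mulr1n /= /rGf mxtrace_tr -Wchar /subchar /mxtrace.
  by apply: eq_bigr => i _; rewrite mxE (tnth_nth 0).
have Hnorm : '[cfRepr rG] = 1.
  rewrite (cfnormE (cfun_onG _)).
  under eq_bigr do rewrite chiE.
  rewrite (eq_bigl predT); last by move=> g; rewrite inE.
  rewrite chi_norm_sum // cardsT mulVf // pnatr_eq0 -lt0n.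
  by apply/card_gt0P; exists 1%g.
have Hirr : cfRepr rG \in irr GG by rewrite irrEchar cfRepr_char Hnorm eqxx.
have [rH irrH EH] := irr_reprP Hirr.
have rs : mx_rsim rH rG by apply/cfRepr_rsimP; rewrite -EH.
have irrG := mx_rsim_irr rs irrH.
have absG : mx_absolutely_irreducible rG := groupC irrG.
pose A := (Mx W L)^T.
have cA : centgmx rG A.
  apply/centgmxP => x _; rewrite /A /= /rGf -!trmx_mul -!Mx_comp //.
  - by congr (_^T); apply: Mx_ext => f /=; rewrite Leq.
  - by move=> w Hw; apply: (Winv x w Hw).
  - exact: rho_lin.
have /is_scalar_mxP [mu Hmu] := mx_abs_irr_cent_scalar absG cA.
exists mu.
have HM : Mx W L = mu%:M by rewrite -[Mx W L]trmxK -/A Hmu tr_scalar_mx.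
have Lb (j : 'I_d) : L b`_j = mu *: b`_j.
  rewrite {1}(coord_vbasis (LW _ (bW j))).
  transitivity (\sum_(i < d) (Mx W L i j) *: b`_i).
    by apply: eq_bigr => i _; rewrite mxE.
  rewrite HM (bigD1 j) //= big1 => [|i ne]; first by rewrite mxE eqxx mulr1n addr0.
  by rewrite mxE (negbTE ne) mulr0n scale0r.
move=> w /coord_vbasis ->; rewrite lin_sumZ // scaler_sumr; apply: eq_bigr => j _.
by rewrite Lb !scalerA mulrC.
Qed.
End Schur.

Lemma fixcount1 n k : fixcount k (1%g : {perm 'I_n}) = 'C(n, k).
Proof.
rewrite /fixcount -[X in 'C(X, _)]card_ord -card_draws; apply: eq_card => x.
by rewrite !inE imset_perm1 eqxx andbT.
Qed.

Lemma chi1 n s : chi_irr s (1%g : {perm 'I_n}) = ('C(n, s))%:R - (binom_pred n s)%:R.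
Proof. by rewrite /chi_irr /binom_pred; case: s => [|s]; rewrite !fixcount1. Qed.

Lemma subchar1 n (W : {vspace L2 n}) : subchar W 1 = (\dim W)%:R.
Proof.
rewrite /subchar (eq_bigr (fun _ => 1)) ?sumr_const ?card_ord //.
by move=> i _; rewrite rho1 (tnth_nth 0) (coord_free _ _ (bfree W)) eqxx.
Qed.

Unset Implicit Arguments.
Set Strict Implicit.

Theorem mainTheorem7 (n r s : nat) (W : {vspace L2 n}) (p : {poly algC})
  (L : L2 n -> L2 n) :
  (1 <= n)%N -> (r <= n)%N -> (s <= minn r (n - r))%N ->
  is_L2_component r s W -> is_Lambda r s W p L ->
  traceL2 L = ('C(n, r))%:R /\
  (let c : algC := (('C(n, s))%:R - (binom_pred n s)%:R) / ('C(n, r))%:R in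
   forall f : L2 n,
     c *: L f \in W /\
     (forall h, h \in W -> dotL2 (f - c *: L f) h = 0)).
Proof.
move=> Hn Hr Hs HW [[Llin Leq] LW Lperp [Psize P0] Lker].
have HL : linL L by move=> a u v; apply: Llin.
have Ldec f w : w \in W -> (forall h, h \in W -> dotL2 (f - w) h = 0) -> L f = L w.
  move=> Ww Hperp.
  have -> : f = w + (f - w) by rewrite addrC subrK.
  by rewrite linD // (Lperp (f - w) Hperp) addr0.
have LWall f : L f \in W.
  have [w Ww Hperp] := decomp W f.
  by rewrite (Ldec f w Ww Hperp); apply: LW.
have Hs2 : (s + s <= n)%N by move: Hs; rewrite leq_min => /andP[]; lia.
have [mu Hmu] := schur HW Hs2 HL Leq LW.
have Tr1 : traceL2 L = ('C(n, r))%:R.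
  rewrite /traceL2 (bigID (fun x : {set 'I_n} => #|x| == r)) /=.
  rewrite [X in _ + X]big1 ?addr0; last first.
    by move=> x Hx; case: HW => Wsupp _ _; apply: Wsupp => //; apply: LWall.
  rewrite (eq_bigr (fun _ => 1)); last first.
    move=> x /eqP Hx; rewrite Lker // (bigD1 x) /=; last by rewrite Hx.
    rewrite big1 => [|y /andP[_ ne]]; last by rewrite ffunE (negbTE ne) mulr0.
    by rewrite ffunE eqxx mulr1 setDv cards0 addr0 P0.
  rewrite sumr_const -[X in 'C(X, _)]card_ord -card_draws.
  by congr (_%:R); apply: eq_card => x; rewrite !inE.
have Tr2 : traceL2 L = (\dim W)%:R * mu.
  rewrite /traceL2.
  have E x : L (deltaL2 x) x = \sum_(i < \dim W) coord (vbasis W) i (L (deltaL2 x)) * (vbasis W)`_i x.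
    by rewrite {1}(coord_vbasis (LWall _)) sum_ffunE; apply: eq_bigr => i _; rewrite ffunE.
  rewrite (eq_bigr _ (fun x _ => E x)) exchange_big /=.
  transitivity (\sum_(i < \dim W) mu); last by rewrite sumr_const card_ord mulr_natl.
  apply: eq_bigr => i _.
  have Eb : (vbasis W)`_i = \sum_x ((vbasis W)`_i x) *: deltaL2 x.
    apply/ffunP => y; rewrite sum_ffunE (bigD1 y) //= big1 => [|x ne].
      by rewrite !ffunE eqxx addr0; exact: (esym (mulr1 _)).
    by rewrite !ffunE eq_sym (negbTE ne); exact: (mulr0 _).
  transitivity (coord (vbasis W) i (L (\sum_x ((vbasis W)`_i x) *: deltaL2 x))).
    rewrite lin_sumZ // linear_sum; apply: eq_bigr => x _.
    by rewrite linearZ /= mulrC.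
  by rewrite -Eb Hmu ?bW // linearZ /= (coord_free _ _ (bfree W)) eqxx mulr1.
have Hd : (\dim W)%:R = ('C(n, s))%:R - (binom_pred n s)%:R :> algC.
  by case: HW => _ _ Wchar; rewrite -subchar1 Wchar chi1.
have HC : ('C(n, r))%:R != 0 :> algC by rewrite pnatr_eq0 -lt0n bin_gt0.
split=> // c f.
have [w Ww Hperp] := decomp W f.
have Lf : L f = mu *: w by rewrite (Ldec f w Ww Hperp) Hmu.
have cmu : c * mu = 1.
  by rewrite /c -Hd mulrAC -Tr2 Tr1 mulfV.
have -> : c *: L f = w by rewrite Lf scalerA cmu scale1r.
by split.
Qed.
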